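(* Let $\mathfrak{g}$ be a finite-dimensional semisimple Lie algebra over an algebraically closed field of characteristic $0$, with root system $R$ and base $\Pi$. Let $S\subset\Pi$ and $n=\operatorname{card}\mathcal{K}(S)$. There exist subsets $S_1,\dots,S_n$ of $\Pi$ such that: (i) $S_1\subset S_2\subset\cdots\subset S_n=S$; (ii) $\mathcal{K}(S_1)\subset\mathcal{K}(S_2)\subset\cdots\subset\mathcal{K}(S_n)$; (iii) $\operatorname{card}\mathcal{K}(S_i)=i$ for $1\leqslant i\leqslant n$.
   Context: For $S\subset\Pi$, $R^S=R\cap\mathbb{Z}S$. For $\alpha\in R$, $H_\alpha$ is the coroot ($\alpha(H_\alpha)=2$, $H_\alpha\in[\mathfrak{g}^\alpha,\mathfrak{g}^{-\alpha}]$) and $\langle\lambda,\alpha^\vee\rangle=\lambda(H_\alpha)$. For connected $S\subset\Pi$ (in the Dynkin diagram), $\varepsilon_S$ is the highest root of the irreducible root system $R^S$ w.r.t. the base $S$. The set $\mathcal{K}(S)$ of subsets of $S$ is defined by induction on $\operatorname{card}S$: $\mathcal{K}(\emptyset)=\emptyset$; if $S_1,\dots,S_r$ are the connected components of $S$, $\mathcal{K}(S)=\mathcal{K}(S_1)\cup\dots\cup\mathcal{K}(S_r)$; if $S$ is connected, $\mathcal{K}(S)=\{S\}\cup\mathcal{K}(\{\alpha\in S:\langle\alpha,\varepsilon_S^\vee\rangle=0\})$. *)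

(* Defs.v *)
From HB Require Import structures.
From mathcomp Require Import all_boot all_order all_algebra.
Set Implicit Arguments. Unset Strict Implicit. Unset Printing Implicit Defensive.
Import Order.TTheory GRing.Theory Num.Theory.
Local Open Scope ring_scope.

Section RootSystems.
Variables (R : realFieldType) (d : nat).

Definition dotv (x y : 'rV[R]_d) : R := (x *m y^T) 0 0.

Definition cpair (x y : 'rV[R]_d) : R := 2 * dotv x y / dotv y y.

Variables (T : finType) (v : T -> 'rV[R]_d).

(* The roots are indexed by the finite type T via the injection v. *)
Definition is_root_system : Prop :=
  [/\ injective v,
      (forall a, v a != 0),
      (forall a b, exists z : int, cpair (v b) (v a) = z%:~R),
      (forall a b, exists c, v c = v b - cpair (v b) (v a) *: v a)
    & (forall a b (c : R), v b = c *: v a -> c = 1 \/ c = -1)].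

(* Pi is a base; coord t a is the coefficient of the simple root a in the
   root t. *)
Definition is_base (Pi : {set T}) (coord : T -> T -> int) : Prop :=
  [/\ (forall c : T -> R, \sum_(a in Pi) c a *: v a = 0 ->
          forall a, a \in Pi -> c a = 0),
      (forall t, v t = \sum_(a in Pi) (coord t a)%:~R *: v a)
    & (forall t, (forall a, a \in Pi -> (0 <= coord t a)%R) \/
                 (forall a, a \in Pi -> (coord t a <= 0)%R))].

Variables (Pi : {set T}) (coord : T -> T -> int).

(* R^S = R \cap Z S *)
Definition rootsS (S : {set T}) : {set T} :=
  [set t | [forall a in Pi, (a \notin S) ==> (coord t a == 0)]].

Definition is_highest (S : {set T}) (e : T) : bool :=
  (e \in rootsS S) &&
  [forall t in rootsS S, [forall a in S, (coord t a <= coord e a)%R]].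

Definition highest (S : {set T}) : option T := [pick e | is_highest S e].

Definition dynkin_adj (S : {set T}) : rel T :=
  fun a b => [&& a \in S, b \in S & cpair (v a) (v b) != 0].

Definition dcomp (S : {set T}) (a : T) : {set T} :=
  [set b in S | connect (dynkin_adj S) a b].

Definition dcomponents (S : {set T}) : {set {set T}} :=
  [set dcomp S a | a in S].

Definition dconnected (S : {set T}) : bool :=
  (S != set0) && [forall a in S, forall b in S, connect (dynkin_adj S) a b].

Fixpoint Kfuel (n : nat) (S : {set T}) : {set {set T}} :=
  match n with
  | 0 => set0
  | n'.+1 =>
    if S == set0 then set0 else
    if dconnected S then
      S |: (match highest S with
            | Some e => Kfuel n' [set a in S | cpair (v a) (v e) == 0]
            | None => set0
            end)
    else \bigcup_(C in dcomponents S) Kfuel n' C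
  end.

Definition Kset (S : {set T}) : {set {set T}} := Kfuel #|S| S.

End RootSystems.

(* Main.v *)
Require Import Defs.
From HB Require Import structures.
From mathcomp Require Import all_boot all_order all_algebra.
From mathcomp Require Import zify.
Set Implicit Arguments. Unset Strict Implicit. Unset Printing Implicit Defensive.
Import Order.TTheory GRing.Theory Num.Theory.

Section Aux.
Variables (R : realFieldType) (d : nat).
Local Open Scope ring_scope.

Lemma dotC (x y : 'rV[R]_d) : dotv x y = dotv y x.
Proof. by rewrite /dotv -(trmxK (x *m y^T)) trmx_mul trmxK mxE. Qed.

Lemma dot_self_eq0 (x : 'rV[R]_d) : dotv x x = 0 -> x = 0.
Proof.
rewrite /dotv mxE => H; apply/matrixP => i j; rewrite (ord1 i) !mxE.
have H0 : forall k : 'I_d, true -> 0 <= x 0 k * x^T k 0.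
  by move=> k _; rewrite mxE -expr2; exact: sqr_ge0.
move: (psumr_eq0P H0 H) => /(_ j isT); rewrite mxE => /eqP.
by rewrite mulf_eq0 orbb => /eqP.
Qed.

Lemma dot_suml (I : finType) (P : pred I) (c : I -> R) (w : I -> 'rV[R]_d) y :
  dotv (\sum_(a | P a) c a *: w a) y = \sum_(a | P a) c a * dotv (w a) y.
Proof.
by rewrite /dotv mulmx_suml summxE; apply: eq_bigr => a _; rewrite -scalemxAl mxE.
Qed.
End Aux.

Section Main.
Variables (R : realFieldType) (d : nat) (T : finType) (v : T -> 'rV[R]_d)
  (Pi : {set T}) (coord : T -> T -> int).
Hypothesis hv : is_root_system v.
Hypothesis hbase : is_base v Pi coord.
Local Open Scope ring_scope.

Local Notation K := (Kfuel v Pi coord).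
Local Notation Ks := (Kset v Pi coord).
Local Notation adj := (dynkin_adj v).

Lemma vnz a : v a != 0. Proof. by case: hv. Qed.

Lemma dd_nz a : dotv (v a) (v a) != 0.
Proof. by apply/eqP => /dot_self_eq0 /eqP; rewrite (negbTE (vnz a)). Qed.

Lemma cpair_nz a b : (cpair (v a) (v b) != 0) = (dotv (v a) (v b) != 0).
Proof.
rewrite /cpair -mulrA mulf_eq0 pnatr_eq0 /= mulf_eq0 invr_eq0.
by rewrite (negbTE (dd_nz b)) orbF.
Qed.

Lemma cpairC a b : (cpair (v a) (v b) != 0) = (cpair (v b) (v a) != 0).
Proof. by rewrite !cpair_nz dotC. Qed.

Lemma cpair_self a : cpair (v a) (v a) != 0.
Proof. by rewrite cpair_nz dd_nz. Qed.

Lemma adj_sym S : symmetric (adj S).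
Proof.
move=> a b; rewrite /dynkin_adj cpairC.
by case: (a \in S); case: (b \in S).
Qed.

Lemma conn_sym S : connect_sym (adj S).
Proof. exact: sym_connect_sym (adj_sym S). Qed.

Lemma KfuelS n S : K n.+1 S =
  if S == set0 then set0 else
  if dconnected v S then
    S |: (match highest Pi coord S with
          | Some e => K n [set a in S | cpair (v a) (v e) == 0]
          | None => set0
          end)
  else \bigcup_(C in dcomponents v S) K n C.
Proof. by []. Qed.

Lemma Kfuel_sub n S X : X \in K n S -> (X != set0) && (X \subset S).
Proof.
elim: n S => [|n IH] S; first by rewrite inE.
rewrite KfuelS; case: ifP => [_|S0]; first by rewrite inE.
case: ifP => _.
  case: (highest Pi coord S) => [e|]; rewrite !inE.
    case/orP => [/eqP->|/IH /andP[-> sub]]; first by rewrite S0 subxx.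
    by apply: subset_trans sub _; apply/subsetP => a; rewrite inE => /andP[].
  by rewrite orbF => /eqP ->; rewrite S0 subxx.
move/bigcupP => [C /imsetP [a aS ->] /IH /andP[-> sub]].
by apply: subset_trans sub _; apply/subsetP => b; rewrite inE => /andP[].
Qed.

Lemma highest_strict S e : highest Pi coord S = Some e ->
  (#|[set a in S | cpair (v a) (v e) == 0%R]| < #|S|)%N.
Proof.
move=> he.
have : is_highest Pi coord S e.
  by move: he; rewrite /highest; case: pickP => // e' He [<-].
move=> /andP [eS _]; rewrite inE in eS; move/forall_inP: eS => eS.
apply: proper_card; apply/properP; split.
  by apply/subsetP => a; rewrite inE => /andP[].
case: (pickP [pred a | (a \in S) && (cpair (v a) (v e) != 0)]) =>
  [a /andP[aS ne] | H].
  by exists a => //; rewrite inE aS.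
exfalso.
have : dotv (v e) (v e) = 0.
  case: hbase => _ hcoord _.
  rewrite {1}(hcoord e) dot_suml big1 // => a aPi.
  case: (boolP (a \in S)) => aS.
    have := H a; rewrite /= aS /= => H'.
    have /negbFE/eqP -> : (dotv (v a) (v e) != 0) = false by rewrite -cpair_nz.
    by rewrite mulr0.
  have /eqP -> := implyP (eS a aPi) aS.
  by rewrite mul0r.
by move/dot_self_eq0/eqP; rewrite (negbTE (vnz e)).
Qed.

Lemma comp_strict (S : {set T}) a : a \in S -> ~~ dconnected v S ->
  (#|dcomp v S a| < #|S|)%N.
Proof.
move=> aS nconn.
apply: proper_card; apply/properP; split.
  by apply/subsetP => b; rewrite inE => /andP[].
case: (pickP [pred b | (b \in S) && (b \notin dcomp v S a)]) =>
  [b /andP[bS nb] | H]; first by exists b.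
exfalso; move/negP: nconn; apply.
rewrite /dconnected; apply/andP; split; first by apply/set0Pn; exists a.
apply/forall_inP => b bS; apply/forall_inP => c cS.
have : b \in dcomp v S a by have := H b; rewrite /= bS /= => /negbFE.
have : c \in dcomp v S a by have := H c; rewrite /= cS /= => /negbFE.
rewrite !inE => /andP[_ ac] /andP[_ ab].
by apply: connect_trans ac; rewrite conn_sym.
Qed.

Lemma Kfuel_step n (S : {set T}) : (#|S| <= n)%N -> K n.+1 S = K n S.
Proof.
elim: n S => [|n IH] S hS.
  have /eqP S0 : S == set0 by rewrite -cards_eq0 -leqn0.
  by rewrite S0 KfuelS eqxx.
rewrite KfuelS [RHS]KfuelS; case: ifP => // S0.
case: ifP => Sc.
  case he: (highest Pi coord S) => [e|] //.
  by rewrite IH // -ltnS (leq_trans (highest_strict he)).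
apply: eq_bigr => C /imsetP[a aS ->]; apply: IH.
by rewrite -ltnS (leq_trans (comp_strict aS (negbT Sc))).
Qed.

Lemma Kfuel_Kset n (S : {set T}) : (#|S| <= n)%N -> K n S = Ks S.
Proof.
move=> hS; rewrite /Kset -(subnK hS).
elim: (n - #|S|)%N => // k IHk.
by rewrite addSn Kfuel_step ?IHk // leq_addl.
Qed.

Lemma Kset0 : Ks set0 = set0.
Proof. by rewrite /Kset cards0. Qed.

Lemma Kset_sub S X : X \in Ks S -> (X != set0) && (X \subset S).
Proof. exact: Kfuel_sub. Qed.

Lemma dcomp_conn S a : dconnected v S -> a \in S -> dcomp v S a = S.
Proof.
move=> /andP[_ /forall_inP H] aS; apply/setP => b; rewrite inE.
apply/andP/idP => [[]//| bS]; split => //.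
exact: (forall_inP (H a aS)) b bS.
Qed.

Lemma card_succ (S : {set T}) : S != set0 -> exists m, #|S| = m.+1.
Proof.
case E: #|S| => [|m]; last by exists m.
by rewrite -cards_eq0 E.
Qed.

Lemma Kset_comp S : Ks S = \bigcup_(C in dcomponents v S) Ks C.
Proof.
case: (boolP (S == set0)) => [/eqP -> | S0].
  by rewrite /dcomponents imset0 big_set0 Kset0.
case: (boolP (dconnected v S)) => Sc.
  have -> : dcomponents v S = [set S].
    apply/setP => C; rewrite inE; apply/imsetP/eqP => [[a aS ->]|->].
      exact: dcomp_conn.
    case/set0Pn: S0 => a aS; exists a => //; by rewrite dcomp_conn.
  by rewrite big_set1.
have [m hm] := card_succ S0.
rewrite {1}/Kset hm KfuelS (negbTE S0) (negbTE Sc).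
apply: eq_bigr => C /imsetP[a aS ->]; apply: Kfuel_Kset.
by rewrite -ltnS -hm; exact: comp_strict.
Qed.

Lemma Kset_conn S e : dconnected v S -> highest Pi coord S = Some e ->
  Ks S = S |: Ks [set a in S | cpair (v a) (v e) == 0].
Proof.
move=> Sc he; have S0 : S != set0 by case/andP: Sc.
have [m hm] := card_succ S0.
rewrite {1}/Kset hm KfuelS (negbTE S0) Sc he Kfuel_Kset //.
by rewrite -ltnS -hm; exact: highest_strict.
Qed.

Lemma Kset_conn_none S : dconnected v S -> highest Pi coord S = None ->
  Ks S = [set S].
Proof.
move=> Sc he; have S0 : S != set0 by case/andP: Sc.
have [m hm] := card_succ S0.
by rewrite {1}/Kset hm KfuelS (negbTE S0) Sc he setU0.
Qed.

Definition orth (A B : {set T}) :=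
  forall a b, a \in A -> b \in B -> cpair (v a) (v b) == 0.

Lemma orthC A B : orth A B -> orth B A.
Proof.
move=> h a b aB bA; move: (h b a bA aB); apply: contraLR.
by rewrite cpairC.
Qed.

Lemma orth_subr A B (X : {set T}) : orth A B -> X \subset B -> orth A X.
Proof. by move=> h sub a b aA bX; apply: h => //; exact: (subsetP sub). Qed.

Lemma connect_orth A B a b : orth A B -> a \in A ->
  connect (adj (A :|: B)) a b -> (b \in A) && connect (adj A) a b.
Proof.
move=> hAB aA /connectP [p]; elim: p a aA => [|y p IH] a aA /=.
  by move=> _ ->; rewrite aA connect0.
move=> /andP[hay hp] hb.
move: hay; rewrite /dynkin_adj !inE => /and3P[_ yAB c].
have yA : y \in A.
  move: yAB => /orP [//| yB].
  by move: (hAB a y aA yB); rewrite (negbTE c).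
have /andP[-> hc] := IH y yA hp hb.
rewrite andTb (connect_trans _ hc) //; apply: connect1.
by rewrite /dynkin_adj aA yA c.
Qed.

Lemma dcomp_orth A B a : orth A B -> a \in A ->
  dcomp v (A :|: B) a = dcomp v A a.
Proof.
move=> h aA; apply/setP => b; rewrite !inE.
apply/andP/andP => [[_ /(connect_orth h aA) /andP[]]//|[bA c]].
split; first by rewrite bA.
apply: connect_sub c => x y hxy; apply: connect1.
by move: hxy; rewrite /dynkin_adj !inE => /and3P[-> -> ->].
Qed.

Lemma comp_orth A B : orth A B ->
  dcomponents v (A :|: B) = dcomponents v A :|: dcomponents v B.
Proof.
move=> h; rewrite /dcomponents imsetU; congr (_ :|: _); apply: eq_in_imset => a aX.
  exact: dcomp_orth.
rewrite setUC; exact: dcomp_orth (orthC h) aX.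
Qed.

Lemma Kset_orth A B : orth A B -> Ks (A :|: B) = Ks A :|: Ks B.
Proof. by move=> h; rewrite Kset_comp comp_orth // bigcup_setU -!Kset_comp. Qed.

Lemma card_Kset_orth A B : orth A B -> #|Ks (A :|: B)| = (#|Ks A| + #|Ks B|)%N.
Proof.
move=> h; rewrite Kset_orth // cardsU.
suff -> : Ks A :&: Ks B = set0 by rewrite cards0 subn0.
apply/setP => X; rewrite !inE; apply/negbTE/andP => [[]].
move=> /Kset_sub /andP[X0 XA] /Kset_sub /andP[_ XB].
case/set0Pn: X0 => x xX.
move: (h x x (subsetP XA x xX) (subsetP XB x xX)).
by rewrite (negbTE (cpair_self x)).
Qed.

Lemma main_ind (S : {set T}) : exists Ss : nat -> {set T},
  [/\ (forall i, (1 <= i <= #|Ks S|)%N -> Ss i \subset S),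
      (forall i, (1 <= i < #|Ks S|)%N -> Ss i \subset Ss i.+1),
      ((0 < #|Ks S|)%N -> Ss #|Ks S| = S),
      (forall i, (1 <= i < #|Ks S|)%N -> Ks (Ss i) \subset Ks (Ss i.+1))
    & (forall i, (1 <= i <= #|Ks S|)%N -> #|Ks (Ss i)| = i)] /\
  (S != set0 -> (0 < #|Ks S|)%N).
Proof.
move: {2}#|S|.+1 (ltnSn #|S|) => m; elim: m S => [//|m IH] S hS.
case: (boolP (S == set0)) => [/eqP -> | S0].
  by exists (fun _ => set0); rewrite Kset0 cards0; split => //; split => //; case.
case: (boolP (dconnected v S)) => Sc.
  case he: (highest Pi coord S) => [e|].
    set S' := [set a in S | cpair (v a) (v e) == 0].
    have lt : (#|S'| < #|S|)%N := highest_strict he.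
    have S'S : S' \subset S by apply/subsetP => a; rewrite inE => /andP[].
    have [Ss [[h1 h2 h3 h4 h5] _]] := IH S' (leq_trans lt hS).
    set n' := #|Ks S'|.
    have SnotK : S \notin Ks S'.
      apply/negP => /Kset_sub /andP[_ sub].
      have := subset_leq_card sub; lia.
    have hn : #|Ks S| = n'.+1 by rewrite (Kset_conn Sc he) cardsU1 SnotK.
    rewrite hn.
    exists (fun i => if (i <= n')%N then Ss i else S); split; [split|].
    - move=> i hi; case: ifP => hi'; last exact: subxx.
      by apply: subset_trans (h1 i _) S'S; lia.
    - move=> i hi /=; case: (boolP (i.+1 <= n')%N) => hi1.
        by rewrite (ltnW hi1); apply: h2; lia.
      have -> : (i <= n')%N = true by lia.
      by apply: subset_trans (h1 i _) S'S; lia.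
    - by rewrite ltnn.
    - move=> i hi /=; case: (boolP (i.+1 <= n')%N) => hi1.
        by rewrite (ltnW hi1); apply: h4; lia.
      have ei : i = n' by lia.
      rewrite ei leqnn ?ltnn h3; last by lia.
      by rewrite (Kset_conn Sc he); exact: subsetUr.
    - move=> i hi /=; case: ifP => hi'.
        by apply: h5; lia.
      have -> : i = n'.+1 by lia.
      exact: hn.
    - by [].
  have hK := Kset_conn_none Sc he.
  have hn : #|Ks S| = 1%N by rewrite hK cards1.
  rewrite hn; exists (fun _ => S); split; [split|by []].
  - by move=> i _; exact: subxx.
  - by move=> i hi; lia.
  - by [].
  - by move=> i hi; lia.
  - by move=> i hi; rewrite hn; lia.
case/set0Pn: (S0) => a aS.
set C := dcomp v S a.
set B := S :\: C.
have hC : (#|C| < #|S|)%N := comp_strict aS Sc.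
have aC : a \in C by rewrite /C inE aS connect0.
have CS : C \subset S by apply/subsetP => b; rewrite /C inE => /andP[].
have BS : B \subset S by exact: subsetDl.
have SCB : S = C :|: B by rewrite /B -{1}(setID S C) (setIidPr CS).
have hB : (#|B| < #|S|)%N.
  apply: proper_card; apply/properP; split => //.
  by exists a => //; rewrite /B inE aC.
have B0 : B != set0.
  by apply/eqP => B0'; move: hC; rewrite SCB B0' setU0 ltnn.
have oCB : orth C B.
  move=> x y xC; rewrite /B inE => /andP[yNC yS]; move: xC yNC.
  rewrite /C !inE => /andP[xS ax]; rewrite yS /=; apply: contraNT => nz.
  apply: connect_trans ax (connect1 _).
  by rewrite /dynkin_adj xS yS nz.
have [SC [[c1 c2 c3 c4 c5] c6]] := IH C (leq_trans hC hS).
have [SB [[b1 b2 b3 b4 b5] b6]] := IH B (leq_trans hB hS).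
set nC := #|Ks C|.
set nB := #|Ks B|.
have nC0 : (0 < nC)%N by apply: c6; apply/set0Pn; exists a.
have nB0 : (0 < nB)%N := b6 B0.
have hn : #|Ks S| = (nC + nB)%N by rewrite SCB card_Kset_orth.
have oX : forall j, (1 <= j <= nB)%N -> orth C (SB j).
  by move=> j hj; apply: orth_subr oCB (b1 j hj).
have KX : forall j, (1 <= j <= nB)%N -> #|Ks (C :|: SB j)| = (nC + j)%N.
  by move=> j hj; rewrite (card_Kset_orth (oX j hj)) (b5 j hj).
rewrite hn.
exists (fun i => if (i <= nC)%N then SC i else C :|: SB (i - nC)%N); split; [split|].
- move=> i hi; case: ifP => hi'.
    by apply: subset_trans (c1 i _) CS; lia.
  rewrite subUset CS /=; apply: subset_trans (b1 _ _) BS; lia.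
- move=> i hi /=; case: (ltnP i nC) => hi'.
    by rewrite (ltnW hi') ?hi'; apply: c2; lia.
  case: (boolP (i == nC)) => [/eqP ei | ne].
    rewrite ei leqnn ?ltnn subSnn c3 //; exact: subsetUl.
  have -> : (i <= nC)%N = false by lia.
  apply: setUS.
  have -> : (i.+1 - nC = (i - nC).+1)%N by lia.
  by apply: b2; lia.
- move=> _; have -> : (nC + nB <= nC)%N = false by lia.
  by rewrite addKn b3 // -SCB.
- move=> i hi /=; case: (ltnP i nC) => hi'.
    by rewrite (ltnW hi') ?hi'; apply: c4; lia.
  case: (boolP (i == nC)) => [/eqP ei | ne].
    rewrite ei leqnn ?ltnn subSnn c3 //.
    have o1 : orth C (SB 1%N) by apply: oX; lia.
    by rewrite (Kset_orth o1); exact: subsetUl.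
  have -> : (i <= nC)%N = false by lia.
  have -> : (i.+1 - nC = (i - nC).+1)%N by lia.
  have o1 : orth C (SB (i - nC)%N) by apply: oX; lia.
  have o2 : orth C (SB (i - nC).+1) by apply: oX; lia.
  rewrite (Kset_orth o1) (Kset_orth o2); apply: setUS.
  by apply: b4; lia.
- move=> i hi /=; case: ifP => hi'.
    by apply: c5; lia.
  by rewrite KX; lia.
- by move=> _; rewrite addn_gt0 nC0.
Qed.

End Main.

Theorem lemma5p1 (R : realFieldType) (d : nat) (T : finType)
    (v : T -> 'rV[R]_d) (Pi : {set T}) (coord : T -> T -> int) (S : {set T}) :
  is_root_system v -> is_base v Pi coord -> S \subset Pi ->
  let n := #|Kset v Pi coord S| in
  exists Ss : nat -> {set T},
    [/\ (forall i, (1 <= i <= n)%N -> Ss i \subset Pi),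
        (forall i, (1 <= i < n)%N -> Ss i \subset Ss i.+1),
        (0 < n)%N -> Ss n = S,
        (forall i, (1 <= i < n)%N ->
           Kset v Pi coord (Ss i) \subset Kset v Pi coord (Ss i.+1))
      & (forall i, (1 <= i <= n)%N -> #|Kset v Pi coord (Ss i)| = i)].
Proof.
move=> hv hb SPi n.
have [Ss [[h1 h2 h3 h4 h5] _]] := main_ind hv hb S.
exists Ss; split => //.
by move=> i hi; exact: subset_trans (h1 i hi) SPi.
Qed.
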